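(* Let $D=\{(x,z):\ -1<z<0,\ -1<x<z+1\}$, and for $\lambda\in(\tfrac12,\tfrac45)$ let $a=\sqrt{\lambda/(1-\lambda)}$, $P(\lambda)=\{(x,z):\ a-3+\tfrac1a<z-\tfrac{x}{a}<1-a+\tfrac1a,\ 1-a-\tfrac1a<z+\tfrac{x}{a}<a-1-\tfrac1a\}$, $S(\lambda)=\partial P(\lambda)$, and $\chi(x,z,\lambda)$ the indicator of $P(\lambda)$ in $D$. Let $\tfrac12<\lambda_*<\lambda_{**}<\tfrac45$, $\sigma_0\in C^1[\tfrac12,\tfrac45]$, $$\psi(x,z,t)=\int_{\lambda_*}^{\lambda_{**}}\cos(\sqrt\lambda\,t)\,\sigma_0(\lambda)\chi(x,z,\lambda)\,d\lambda,$$ and define $\mathbf U=(u,v,w)$ by $u=-\psi_z$, $v(x,z,t)=\int_0^t\psi_z(x,z,s)\,ds$, $w=\psi_x$. Then $\mathbf U(x,z,t)=\mathbf 0$ for all $t$ and all $(x,z)$ in the open set $D\setminus\bigcup_{\mu\in[\lambda_*,\lambda_{**}]}S(\mu)$ (i.e. in each of the subdomains $D_9,\dots,D_{13}$).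
   Context: The boundaries $S(\lambda_* )$ and $S(\lambda_{**})$ divide $D$ into subdomains $D_1,\dots,D_{13}$; the subdomains $D_9,\dots,D_{13}$ are the connected components of $D\setminus\bigcup_{\mu\in[\lambda_*,\lambda_{**}]}S(\mu)$: $D_9$ is the inner region (contained in every $P(\mu)$), and $D_{10},\dots,D_{13}$ are the regions outside every $P(\mu)$, $\mu\in[\lambda_*,\lambda_{**}]$. $\mathbf U$ is the velocity field of the inertial wave (solution of the linearized rotating-fluid system $u_t=v-p_x$, $v_t=-u$, $w_t=-p_z$, $u_x+w_z=0$, $un_1+wn_3=0$ on $\partial D$) associated with the stream function $\psi$. *)

(* Defs.v *)
From Stdlib Require Import Reals Lra ClassicalEpsilon.
From Coquelicot Require Import Coquelicot.
Open Scope R_scope.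

Definition inD (x z : R) : Prop := -1 < z < 0 /\ -1 < x < z + 1.

Definition a_of (lam : R) : R := sqrt (lam / (1 - lam)).

Definition inP (lam x z : R) : Prop :=
  let a := a_of lam in
  a - 3 + / a < z - x / a < 1 - a + / a /\
  1 - a - / a < z + x / a < a - 1 - / a.

(* S(lambda) = boundary of P(lambda): every neighbourhood of (x,z) meets both
   P(lambda) and its complement (neighbourhoods taken as sup-norm squares,
   which generate the usual topology of R^2). *)
Definition inS (lam x z : R) : Prop :=
  forall eps : R, 0 < eps ->
    (exists x' z', Rabs (x' - x) < eps /\ Rabs (z' - z) < eps /\ inP lam x' z') /\
    (exists x' z', Rabs (x' - x) < eps /\ Rabs (z' - z) < eps /\ ~ inP lam x' z').

Definition chi (x z lam : R) : R :=
  if excluded_middle_informative (inD x z /\ inP lam x z) then 1 else 0.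

(* f is C^1 on the closed interval [a,b]: there is a derivative f' on [a,b]
   (one-sided at the endpoints, i.e. the difference quotient is taken within
   [a,b]) and f' is continuous on [a,b] (relative to [a,b]). *)
Definition C1_on (a b : R) (f : R -> R) : Prop :=
  exists f' : R -> R,
    (forall x, a <= x <= b -> forall eps, 0 < eps -> exists delta, 0 < delta /\
       forall y, a <= y <= b -> y <> x -> Rabs (y - x) < delta ->
         Rabs ((f y - f x) / (y - x) - f' x) < eps) /\
    (forall x, a <= x <= b -> forall eps, 0 < eps -> exists delta, 0 < delta /\
       forall y, a <= y <= b -> Rabs (y - x) < delta ->
         Rabs (f' y - f' x) < eps).

Definition psi (sigma0 : R -> R) (ls lss : R) (x z t : R) : R :=
  RInt (fun lam => cos (sqrt lam * t) * sigma0 lam * chi x z lam) ls lss.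

Definition u_fld sigma0 ls lss (x z t : R) : R :=
  - Derive (fun z' => psi sigma0 ls lss x z' t) z.
Definition v_fld sigma0 ls lss (x z t : R) : R :=
  RInt (fun s => Derive (fun z' => psi sigma0 ls lss x z' s) z) 0 t.
Definition w_fld sigma0 ls lss (x z t : R) : R :=
  Derive (fun x' => psi sigma0 ls lss x' z t) x.

(* Main.v *)
Require Import Defs.
From Stdlib Require Import Reals Lra ClassicalEpsilon.
From Coquelicot Require Import Coquelicot.
Open Scope R_scope.

Definition mn (u v : R) := (u + v - Rabs (u - v)) / 2.
Lemma mn_le_l u v : mn u v <= u. Proof. unfold mn; destruct (Rcase_abs (u - v)); [rewrite Rabs_left by lra|rewrite Rabs_right by lra]; lra. Qed.
Lemma mn_le_r u v : mn u v <= v. Proof. unfold mn; destruct (Rcase_abs (u - v)); [rewrite Rabs_left by lra|rewrite Rabs_right by lra]; lra. Qed.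
Lemma mn_cases u v : mn u v = u \/ mn u v = v.
Proof. unfold mn; destruct (Rcase_abs (u - v)); [rewrite Rabs_left by lra|rewrite Rabs_right by lra]; lra. Qed.

Lemma continuous_mn (f g : R -> R) l : continuous f l -> continuous g l ->
  continuous (fun y => mn (f y) (g y)) l.
Proof.
  intros Hf Hg.
  apply continuous_ext with (f := fun y => scal (/2) (minus (plus (f y) (g y)) (Rabs (minus (f y) (g y))))).
  { intros y. unfold mn, scal, minus, plus, opp; simpl. unfold mult; simpl.
    change (AbelianMonoid.plus _ ?a ?b) with (a + b).
    unfold Rminus, Rdiv. ring_simplify. reflexivity. }
  apply (@continuous_scal_r _ R_AbsRing R_NormedModule). apply (@continuous_minus _ R_AbsRing R_NormedModule). apply (@continuous_plus _ R_AbsRing R_NormedModule); auto.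
  apply continuous_Rabs_comp. apply (@continuous_minus _ R_AbsRing R_NormedModule); auto.
Qed.

Definition F1 lam x z := z - x / a_of lam - (a_of lam - 3 + / a_of lam).
Definition F2 lam x z := (1 - a_of lam + / a_of lam) - (z - x / a_of lam).
Definition F3 lam x z := (z + x / a_of lam) - (1 - a_of lam - / a_of lam).
Definition F4 lam x z := (a_of lam - 1 - / a_of lam) - (z + x / a_of lam).
Definition M lam x z := mn (mn (F1 lam x z) (F2 lam x z)) (mn (F3 lam x z) (F4 lam x z)).

Lemma a_bounds lam : 1/2 < lam < 4/5 -> 1 < a_of lam < 2.
Proof.
  intros H. unfold a_of. set (q := lam / (1 - lam)).
  assert (Hq : q * (1 - lam) = lam) by (unfold q; field; lra).
  assert (1 < q) by nra. assert (q < 4) by nra.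
  rewrite <- sqrt_1 at 1. replace 2 with (sqrt 4).
  split; apply sqrt_lt_1_alt; lra.
  replace 4 with (2*2) by ring. apply sqrt_square. lra.
Qed.

Lemma inP_iff lam x z : inP lam x z <-> F1 lam x z > 0 /\ F2 lam x z > 0 /\ F3 lam x z > 0 /\ F4 lam x z > 0.
Proof. unfold inP, F1, F2, F3, F4; simpl. split; intros; lra. Qed.

Lemma M_ge lam x z c : c <= M lam x z -> c <= F1 lam x z /\ c <= F2 lam x z /\ c <= F3 lam x z /\ c <= F4 lam x z.
Proof.
  unfold M; intros H.
  pose proof (mn_le_l (mn (F1 lam x z) (F2 lam x z)) (mn (F3 lam x z) (F4 lam x z))).
  pose proof (mn_le_r (mn (F1 lam x z) (F2 lam x z)) (mn (F3 lam x z) (F4 lam x z))).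
  pose proof (mn_le_l (F1 lam x z) (F2 lam x z)). pose proof (mn_le_r (F1 lam x z) (F2 lam x z)).
  pose proof (mn_le_l (F3 lam x z) (F4 lam x z)). pose proof (mn_le_r (F3 lam x z) (F4 lam x z)).
  lra.
Qed.

Lemma M_le lam x z c : M lam x z <= c -> F1 lam x z <= c \/ F2 lam x z <= c \/ F3 lam x z <= c \/ F4 lam x z <= c.
Proof.
  unfold M; intros H.
  destruct (mn_cases (mn (F1 lam x z) (F2 lam x z)) (mn (F3 lam x z) (F4 lam x z))) as [E|E]; rewrite E in H.
  - destruct (mn_cases (F1 lam x z) (F2 lam x z)) as [E'|E']; rewrite E' in H; lra.
  - destruct (mn_cases (F3 lam x z) (F4 lam x z)) as [E'|E']; rewrite E' in H; lra.
Qed.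

Lemma F_close lam x z x' z' d : 1 < a_of lam -> Rabs (x' - x) < d -> Rabs (z' - z) < d ->
  Rabs (F1 lam x' z' - F1 lam x z) < 2*d /\ Rabs (F2 lam x' z' - F2 lam x z) < 2*d /\
  Rabs (F3 lam x' z' - F3 lam x z) < 2*d /\ Rabs (F4 lam x' z' - F4 lam x z) < 2*d.
Proof.
  intros Ha Hx Hz. set (a := a_of lam) in *.
  apply Rabs_def2 in Hx. apply Rabs_def2 in Hz.
  set (r := (x' - x) / a).
  assert (E : x' / a = x / a + r) by (unfold r; field; lra).
  assert (ia : / a * a = 1) by (field; lra).
  assert (0 < / a) by (apply Rinv_0_lt_compat; lra).
  assert (/ a < 1) by nra.
  assert (Hr : r = (x' - x) * / a) by reflexivity.
  assert (-d < r < d) by (rewrite Hr; split; nra).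
  unfold F1, F2, F3, F4; fold a; rewrite E.
  repeat split; apply Rabs_def1; lra.
Qed.

Lemma M0_inS lam x z : 1 < a_of lam < 2 -> M lam x z = 0 -> inS lam x z.
Proof.
  intros Ha H0.
  destruct (M_ge lam x z 0) as (G1 & G2 & G3 & G4); [lra|].
  assert (Hz : exists k, M lam x z <= 0) by (exists 0; lra). clear Hz.
  assert (Hs : M lam x z <= 0) by lra. apply M_le in Hs.
  intros eps Heps. set (a := a_of lam) in *.
  split.
  - set (x0 := (a - 2) / 2). set (z0 := -1/2).
    set (K := 1 + eps + Rabs (x0 - x) + Rabs (z0 - z)).
    assert (HK : 0 < K) by (unfold K; pose proof (Rabs_pos (x0 - x)); pose proof (Rabs_pos (z0 - z)); lra).
    set (s := eps / K).
    assert (HsK : s * K = eps) by (unfold s; field; lra).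
    assert (Hs0 : 0 < s) by (unfold s; apply Rdiv_lt_0_compat; lra).
    assert (Hs1 : s < 1) by (unfold K in HsK; pose proof (Rabs_pos (x0 - x)); pose proof (Rabs_pos (z0 - z)); nra).
    exists (x + s * (x0 - x)), (z + s * (z0 - z)).
    replace (x + s * (x0 - x) - x) with (s * (x0 - x)) by ring.
    replace (z + s * (z0 - z) - z) with (s * (z0 - z)) by ring.
    rewrite !Rabs_mult, (Rabs_pos_eq s) by lra.
    split; [unfold K in HsK; pose proof (Rabs_pos (x0 - x)); pose proof (Rabs_pos (z0 - z)); nra|].
    split; [unfold K in HsK; pose proof (Rabs_pos (x0 - x)); pose proof (Rabs_pos (z0 - z)); nra|].
    apply inP_iff.
    assert (Ha0 : a <> 0) by lra.
    unfold F1, F2, F3, F4 in G1, G2, G3, G4 |- *; fold a in G1, G2, G3, G4 |- *; unfold x0, z0.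
    assert (E : (x + s * ((a - 2) / 2 - x)) / a = (1 - s) * (x / a) + s * ((a - 2) / 2 / a)) by (field; auto).
    assert (E2 : (a - 2) / 2 / a = 1/2 - / a) by (field; auto).
    rewrite E, E2. repeat split; nra.
  - destruct Hs as [H|[H|[H|H]]].
    + exists x, (z - eps/2). rewrite Rminus_diag, Rabs_R0. split; [lra|].
      split; [rewrite Rabs_left by lra; lra|]. rewrite inP_iff. unfold F1 in H |- *. fold a in H |- *. lra.
    + exists x, (z + eps/2). rewrite Rminus_diag, Rabs_R0. split; [lra|].
      split; [rewrite Rabs_right by lra; lra|]. rewrite inP_iff. unfold F2 in H |- *. fold a in H |- *. lra.
    + exists x, (z - eps/2). rewrite Rminus_diag, Rabs_R0. split; [lra|].
      split; [rewrite Rabs_left by lra; lra|]. rewrite inP_iff. unfold F3 in H |- *. fold a in H |- *. lra.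
    + exists x, (z + eps/2). rewrite Rminus_diag, Rabs_R0. split; [lra|].
      split; [rewrite Rabs_right by lra; lra|]. rewrite inP_iff. unfold F4 in H |- *. fold a in H |- *. lra.
Qed.

Lemma q_pos lam : 0 < lam < 1 -> 0 < lam / (1 - lam).
Proof. intros; apply Rdiv_lt_0_compat; lra. Qed.

Lemma F_cont x z lam : 0 < lam < 1 ->
  continuous (fun l => F1 l x z) lam /\ continuous (fun l => F2 l x z) lam /\
  continuous (fun l => F3 l x z) lam /\ continuous (fun l => F4 l x z) lam.
Proof.
  intros H. pose proof (q_pos lam H) as Hq. pose proof (sqrt_lt_R0 _ Hq).
  repeat split; apply (@ex_derive_continuous R_AbsRing R_NormedModule); unfold F1, F2, F3, F4, a_of; auto_derive;
    unfold Rdiv, Rminus in Hq, H0; repeat split; try lra.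
Qed.

Lemma M_cont_dummy : True. Proof. exact I. Qed.
Lemma M_cont x z lam : 0 < lam < 1 -> continuity_pt (fun l => Rabs (M l x z)) lam.
Proof.
  intros H. apply continuity_pt_filterlim. apply (continuous_Rabs_comp (fun l => M l x z)).
  destruct (F_cont x z lam H) as (C1 & C2 & C3 & C4).
  unfold M. apply continuous_mn; apply continuous_mn; auto.
Qed.

Lemma nbhd ls lss x z : 1/2 < ls -> ls < lss -> lss < 4/5 -> inD x z ->
  (forall mu, ls <= mu <= lss -> ~ inS mu x z) ->
  exists d, 0 < d /\ forall x' z', Rabs (x' - x) < d -> Rabs (z' - z) < d ->
    forall lam, ls <= lam <= lss -> chi x' z' lam = chi x z lam.
Proof.
  intros H1 H2 H3 HD HS.
  destruct (continuity_ab_min (fun l => Rabs (M l x z)) ls lss) as [mx [Hmin Hmx]]; [lra| |].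
  { intros c Hc. apply M_cont. lra. }
  simpl in Hmin.
  set (c0 := Rabs (M mx x z)) in *.
  assert (Hc0 : 0 < c0).
  { destruct (Rabs_pos (M mx x z)) as [h|h]; [exact h|].
    exfalso. apply (HS mx Hmx). apply M0_inS. apply a_bounds; lra.
    apply Rabs_eq_0. unfold c0 in h. lra. }
  destruct HD as [[Hz1 Hz2] [Hx1 Hx2]].
  set (d := Rmin (Rmin (c0/4) ((z+1)/4)) (Rmin (-z/4) (Rmin ((x+1)/4) ((z+1-x)/4)))).
  assert (Hd : 0 < d /\ d <= c0/4 /\ d <= (z+1)/4 /\ d <= -z/4 /\ d <= (x+1)/4 /\ d <= (z+1-x)/4).
  { unfold d, Rmin; repeat destruct (Rle_dec _ _); lra. }
  exists d. split; [lra|].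
  intros x' z' Hx Hz lam Hl.
  assert (Ha : 1 < a_of lam < 2) by (apply a_bounds; lra).
  destruct (F_close lam x z x' z' d) as (E1 & E2 & E3 & E4); try lra; auto.
  apply Rabs_def2 in E1; apply Rabs_def2 in E2; apply Rabs_def2 in E3; apply Rabs_def2 in E4.
  pose proof (Rabs_def2 _ _ Hx). pose proof (Rabs_def2 _ _ Hz).
  assert (HD' : inD x' z') by (unfold inD; lra).
  assert (HD : inD x z) by (unfold inD; lra).
  pose proof (Hmin lam Hl) as Hm.
  unfold chi.
  destruct (Rle_or_lt 0 (M lam x z)) as [Hp|Hn].
  - rewrite Rabs_pos_eq in Hm by lra.
    destruct (M_ge lam x z c0 Hm) as (G1 & G2 & G3 & G4).
    assert (inP lam x z) by (apply inP_iff; lra).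
    assert (inP lam x' z') by (apply inP_iff; lra).
    destruct (excluded_middle_informative (inD x' z' /\ inP lam x' z')) as [_|n]; [|tauto].
    destruct (excluded_middle_informative (inD x z /\ inP lam x z)) as [_|n]; [|tauto].
    reflexivity.
  - rewrite Rabs_left in Hm by lra.
    assert (Hm' : M lam x z <= - c0) by lra.
    destruct (M_le lam x z _ Hm') as [G|[G|[G|G]]];
    (assert (~ inP lam x z) by (rewrite inP_iff; lra));
    (assert (~ inP lam x' z') by (rewrite inP_iff; lra));
    (destruct (excluded_middle_informative (inD x' z' /\ inP lam x' z')) as [[_ ?]|_]; [tauto|]);
    (destruct (excluded_middle_informative (inD x z /\ inP lam x z)) as [[_ ?]|_]; [tauto|]);
    reflexivity.
Qed.

Lemma loc_const (f : R -> R) y d : 0 < d -> (forall y', Rabs (y' - y) < d -> f y' = f y) ->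
  is_derive f y 0.
Proof.
  intros Hd H.
  apply is_derive_ext_loc with (f := fun _ => f y).
  - exists (mkposreal d Hd). intros y' Hy'. symmetry. apply H. exact Hy'.
  - auto_derive; auto.
Qed.

Theorem theorem3p1 (ls lss : R) (sigma0 : R -> R) :
  1/2 < ls -> ls < lss -> lss < 4/5 ->
  C1_on (1/2) (4/5) sigma0 ->
  forall x z : R,
    inD x z ->
    (forall mu : R, ls <= mu <= lss -> ~ inS mu x z) ->
    forall t : R,
      ex_derive (fun z' => psi sigma0 ls lss x z' t) z /\
      ex_derive (fun x' => psi sigma0 ls lss x' z t) x /\
      (forall s : R, ex_derive (fun z' => psi sigma0 ls lss x z' s) z) /\
      u_fld sigma0 ls lss x z t = 0 /\
      v_fld sigma0 ls lss x z t = 0 /\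
      w_fld sigma0 ls lss x z t = 0.
Proof.
  intros H1 H2 H3 _ x z HD HS t.
  destruct (nbhd ls lss x z H1 H2 H3 HD HS) as [d [Hd Hch]].
  assert (Hpsi : forall s x' z', Rabs (x' - x) < d -> Rabs (z' - z) < d ->
            psi sigma0 ls lss x' z' s = psi sigma0 ls lss x z s).
  { intros s x' z' Hx Hz. unfold psi. apply RInt_ext.
    intros l Hl. rewrite Rmin_left, Rmax_right in Hl by lra.
    rewrite (Hch x' z' Hx Hz l) by lra. reflexivity. }
  assert (Dz : forall s, is_derive (fun z' => psi sigma0 ls lss x z' s) z 0).
  { intros s. apply (loc_const _ z d Hd). intros y Hy. apply Hpsi; auto.
    rewrite Rminus_diag, Rabs_R0; lra. }
  assert (Dx : is_derive (fun x' => psi sigma0 ls lss x' z t) x 0).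
  { apply (loc_const _ x d Hd). intros y Hy. apply Hpsi; auto.
    rewrite Rminus_diag, Rabs_R0; lra. }
  repeat split.
  - eexists; apply Dz.
  - eexists; apply Dx.
  - intros s; eexists; apply Dz.
  - unfold u_fld. replace (Derive _ z) with 0 by (symmetry; apply is_derive_unique; apply Dz). ring.
  - unfold v_fld. rewrite (RInt_ext _ (fun _ => 0)).
    + rewrite RInt_const. unfold scal; simpl; unfold mult; simpl; ring.
    + intros s _. apply (is_derive_unique _ _ _ (Dz s)).
  - unfold w_fld. apply (is_derive_unique _ _ _ Dx).
Qed.
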